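(* For each $\boldsymbol\alpha\in\mathbb C^d$, ${\rm Ann}(L(\boldsymbol\alpha))={\rm Ann}({}^RL(\boldsymbol\alpha))$ (two-sided ideals of $D(R_A)$).
   Context: $A\subset\mathbb Z^d$ is a finite set generating the group $\mathbb Z^d$; $R_A=\mathbb C[\mathbb NA]\subseteq\mathbb C[t_1^{\pm1},\dots,t_d^{\pm1}]$; $D(R_A)=\{P\in\mathbb C[t^{\pm1}]\langle\partial_1,\dots,\partial_d\rangle:P(R_A)\subseteq R_A\}$; $s_j=t_j\partial_j$. $M(\boldsymbol\alpha)=D(R_A)/\sum_iD(R_A)(s_i-\alpha_i)$, ${}^RM(\boldsymbol\alpha)=D(R_A)/\sum_i(s_i-\alpha_i)D(R_A)$. Let $\mathcal O$ be the category of left $D(R_A)$-modules $M=\bigoplus_{\boldsymbol\lambda}M_{\boldsymbol\lambda}$ with finite-dimensional $M_{\boldsymbol\lambda}=\{x:f(s)x=f(\boldsymbol\lambda)x\ \forall f\}$, and ${}^R\mathcal O$ the category of right modules with finite-dimensional $M_{\boldsymbol\lambda}=\{x:xf(s)=f(-\boldsymbol\lambda)x\ \forall f\}$. $L(\boldsymbol\alpha)$ (resp. ${}^RL(\boldsymbol\alpha)$) is the unique simple quotient of $M(\boldsymbol\alpha)$ in $\mathcal O$ (resp. of ${}^RM(\boldsymbol\alpha)$ in ${}^R\mathcal O$). *)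

(* Defs.v *)
From HB Require Import structures.
From mathcomp Require Import all_boot all_order all_algebra.
From mathcomp Require Import complex.
From mathcomp Require Import Rstruct.
Set Implicit Arguments. Unset Strict Implicit. Unset Printing Implicit Defensive.
Import Order.TTheory GRing.Theory Num.Theory.
Local Open Scope ring_scope.

Definition C : Type := complex Rdefinitions.R.
HB.instance Definition _ := GRing.Field.on C.

(* The lattice Z^d, as integer row vectors; coordinate j of z is z 0 j. *)
Definition Zd (d : nat) := 'rV[int]_d.

Definition generates_Zd d (A : seq (Zd d)) : Prop :=
  forall z : Zd d, exists k : 'I_(size A) -> int, z = \sum_(i < size A) A`_i *~ k i.

Definition inNA d (A : seq (Zd d)) (z : Zd d) : Prop :=
  exists k : 'I_(size A) -> nat, z = \sum_(i < size A) A`_i *+ k i.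

(* A (formal) Laurent series sum_c u(c) t^c is coded by its coefficient
   function u : Z^d -> C; Laurent polynomials are those of finite support.
   Operators of C[t^{+-1}]<d_1..d_d> act on these coefficient functions. *)
Definition Fn d := Zd d -> C.
Definition Op d := Fn d -> Fn d.

(* the operator t^a s^b,  s_j = t_j d_j  :   t^a s^b (t^e) = e^b t^(a+e) *)
Definition tsmon d (a : Zd d) (b : 'I_d -> nat) : Op d :=
  fun u c => (\prod_(j < d) (((c - a) 0 j)%:~R : C) ^+ b j) * u (c - a).

Definition LaurentOp d (P : Op d) : Prop :=
  exists n (coef : 'I_n -> C) (a : 'I_n -> Zd d) (b : 'I_n -> 'I_d -> nat),
    forall u, P u = (fun c => \sum_(k < n) coef k * tsmon (a k) (b k) u c).

Definition inRA d (A : seq (Zd d)) (u : Fn d) : Prop :=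
  (exists s : seq (Zd d), forall c, u c <> 0 -> c \in s) /\
  (forall c, u c <> 0 -> inNA A c).

Definition DRA d (A : seq (Zd d)) (P : Op d) : Prop :=
  LaurentOp P /\ forall u, inRA A u -> inRA A (P u).

Definition opadd d (P Q : Op d) : Op d := fun u c => P u c + Q u c.
Definition opscale d (k : C) (P : Op d) : Op d := fun u c => k * P u c.
Definition opmul d (P Q : Op d) : Op d := fun u => P (Q u).
Definition opid d : Op d := fun u => u.
Definition opS d (j : 'I_d) : Op d := tsmon 0 (fun i => (i == j : nat)).

Record leftDmod d (A : seq (Zd d)) (V : lmodType C) (act : Op d -> V -> V) : Prop := {
  lact_lin : forall P, DRA A P -> forall (k : C) x y, act P (k *: x + y) = k *: act P x + act P y;
  lact_add : forall P Q, DRA A P -> DRA A Q -> forall x, act (opadd P Q) x = act P x + act Q x;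
  lact_scale : forall k P, DRA A P -> forall x, act (opscale k P) x = k *: act P x;
  lact_mul : forall P Q, DRA A P -> DRA A Q -> forall x, act (opmul P Q) x = act P (act Q x);
  lact_one : forall x, act (@opid d) x = x }.

Definition lweight d (V : lmodType C) (act : Op d -> V -> V) (lam : 'I_d -> C) (x : V) :=
  forall j, act (opS j) x = lam j *: x.

Definition fin_dim (V : lmodType C) (S : V -> Prop) : Prop :=
  exists s : seq V, (forall v, v \in s -> S v) /\
    forall x, S x -> exists k : 'I_(size s) -> C, x = \sum_(i < size s) k i *: s`_i.

Definition inO_left d (V : lmodType C) (act : Op d -> V -> V) : Prop :=
  (forall x : V, exists n (lam : 'I_n -> 'I_d -> C) (xs : 'I_n -> V),
      (forall i, lweight act (lam i) (xs i)) /\ x = \sum_(i < n) xs i) /\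
  (forall lam, fin_dim (lweight act lam)).

Definition lsubmod d (A : seq (Zd d)) (V : lmodType C) (act : Op d -> V -> V) (S : V -> Prop) :=
  [/\ S 0, (forall x y, S x -> S y -> S (x + y)), (forall (k : C) x, S x -> S (k *: x))
    & (forall P x, DRA A P -> S x -> S (act P x))].

Definition lsimple d (A : seq (Zd d)) (V : lmodType C) (act : Op d -> V -> V) : Prop :=
  (exists x : V, x <> 0) /\
  forall S, lsubmod A act S -> (forall x, S x -> x = 0) \/ (forall x, S x).

(* V is a quotient of M(alpha) = D / sum_i D (s_i - alpha_i) *)
Definition quot_M d (A : seq (Zd d)) (alpha : 'I_d -> C) (V : lmodType C) (act : Op d -> V -> V) :=
  exists v : V, (forall j, act (opS j) v = alpha j *: v) /\
    forall x, exists P, DRA A P /\ x = act P v.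

Record rightDmod d (A : seq (Zd d)) (V : lmodType C) (act : V -> Op d -> V) : Prop := {
  ract_lin : forall P, DRA A P -> forall (k : C) x y, act (k *: x + y) P = k *: act x P + act y P;
  ract_add : forall P Q, DRA A P -> DRA A Q -> forall x, act x (opadd P Q) = act x P + act x Q;
  ract_scale : forall k P, DRA A P -> forall x, act x (opscale k P) = k *: act x P;
  ract_mul : forall P Q, DRA A P -> DRA A Q -> forall x, act x (opmul P Q) = act (act x P) Q;
  ract_one : forall x, act x (@opid d) = x }.

Definition rweight d (V : lmodType C) (act : V -> Op d -> V) (lam : 'I_d -> C) (x : V) :=
  forall j, act x (opS j) = - lam j *: x.

Definition inO_right d (V : lmodType C) (act : V -> Op d -> V) : Prop :=
  (forall x : V, exists n (lam : 'I_n -> 'I_d -> C) (xs : 'I_n -> V),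
      (forall i, rweight act (lam i) (xs i)) /\ x = \sum_(i < n) xs i) /\
  (forall lam, fin_dim (rweight act lam)).

Definition rsubmod d (A : seq (Zd d)) (V : lmodType C) (act : V -> Op d -> V) (S : V -> Prop) :=
  [/\ S 0, (forall x y, S x -> S y -> S (x + y)), (forall (k : C) x, S x -> S (k *: x))
    & (forall P x, DRA A P -> S x -> S (act x P))].

Definition rsimple d (A : seq (Zd d)) (V : lmodType C) (act : V -> Op d -> V) : Prop :=
  (exists x : V, x <> 0) /\
  forall S, rsubmod A act S -> (forall x, S x -> x = 0) \/ (forall x, S x).

(* V is a quotient of ^R M(alpha) = D / sum_i (s_i - alpha_i) D *)
Definition quot_RM d (A : seq (Zd d)) (alpha : 'I_d -> C) (V : lmodType C) (act : V -> Op d -> V) :=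
  exists v : V, (forall j, act v (opS j) = alpha j *: v) /\
    forall x, exists P, DRA A P /\ x = act v P.

Definition lAnn d (A : seq (Zd d)) (V : lmodType C) (act : Op d -> V -> V) (P : Op d) : Prop :=
  DRA A P /\ forall x, act P x = 0.
Definition rAnn d (A : seq (Zd d)) (V : lmodType C) (act : V -> Op d -> V) (P : Op d) : Prop :=
  DRA A P /\ forall x, act x P = 0.

(* Main.v *)
Require Import Defs.
From mathcomp Require Import all_boot all_order all_algebra.
From mathcomp Require Import complex Rstruct.
From mathcomp Require Import ring.
From Stdlib Require Import Classical FunctionalExtensionality.
Set Implicit Arguments. Unset Strict Implicit. Unset Printing Implicit Defensive.
Import Order.TTheory GRing.Theory Num.Theory.
Local Open Scope ring_scope.

Definition mono d (x : 'I_d -> C) (b : 'I_d -> nat) : C := \prod_(j < d) x j ^+ b j.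
Definition ev d (z : Zd d) : 'I_d -> C := fun j => (z 0 j)%:~R.
Definition term d := (C * Zd d * ('I_d -> nat))%type.
Definition LRep d (P : Op d) (s : seq (term d)) :=
  forall u c, P u c = \sum_(p <- s) p.1.1 * tsmon p.1.2 p.2 u c.

Lemma tsmonE d a b (u : Fn d) c : tsmon a b u c = mono (ev (c - a)) b * u (c - a).
Proof. by []. Qed.

Lemma Laurent_LRep d (P : Op d) : LaurentOp P -> exists s, LRep P s.
Proof.
move=> [n [coef [a [b H]]]].
exists [seq (coef k, a k, b k) | k <- index_enum 'I_n] => u c.
by rewrite H big_map.
Qed.

Lemma LRep_Laurent d (P : Op d) s : LRep P s -> LaurentOp P.
Proof.
move=> H; pose x0 : term d := (0, 0, fun _ => 0%N).
exists (size s), (fun k => (nth x0 s k).1.1), (fun k => (nth x0 s k).1.2),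
  (fun k => (nth x0 s k).2) => u.
apply: functional_extensionality => c.
by rewrite H (big_nth x0) big_mkord.
Qed.

Lemma mono0 d (x : 'I_d -> C) : mono x (fun _ => 0%N) = 1.
Proof. by rewrite /mono big1 // => j _; rewrite expr0. Qed.

Lemma monoD d (x : 'I_d -> C) a b : mono x (fun j => (a j + b j)%N) = mono x a * mono x b.
Proof. by rewrite /mono -big_split; apply: eq_bigr => j _; rewrite exprD. Qed.

Lemma monoX d (x : 'I_d -> C) j : mono x (fun i => (i == j : nat)) = x j.
Proof.
rewrite /mono (bigD1 j) //= eqxx expr1 big1 ?mulr1 // => i /negbTE ->.
by rewrite expr0.
Qed.

Definition peval d (s : seq (C * ('I_d -> nat))) x := \sum_(m <- s) m.1 * mono x m.2.
Definition pmul d (s1 s2 : seq (C * ('I_d -> nat))) :=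
  [seq (m1.1 * m2.1, fun j => (m1.2 j + m2.2 j)%N) | m1 <- s1, m2 <- s2].
Definition pconst d (c : C) : seq (C * ('I_d -> nat)) := [:: (c, fun _ => 0%N)].
Definition pX d (j : 'I_d) : seq (C * ('I_d -> nat)) := [:: (1, fun i => (i == j : nat))].
Definition ppow d (s : seq (C * ('I_d -> nat))) n := iter n (pmul s) (pconst d 1).
Definition shiftp d (y : 'I_d -> C) (b : 'I_d -> nat) :=
  \big[@pmul d/pconst d 1]_(j < d) ppow (pX j ++ pconst d (y j)) (b j).

Lemma peval_mul d s1 s2 (x : 'I_d -> C) : peval (pmul s1 s2) x = peval s1 x * peval s2 x.
Proof.
rewrite /peval /pmul big_allpairs_dep /= mulr_suml; apply: eq_bigr => m1 _.
rewrite mulr_sumr; apply: eq_bigr => m2 _ /=.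
by rewrite monoD mulrACA.
Qed.

Lemma peval_const d c (x : 'I_d -> C) : peval (pconst d c) x = c.
Proof. by rewrite /peval big_seq1 mono0 mulr1. Qed.

Lemma peval_X d j (x : 'I_d -> C) : peval (pX j) x = x j.
Proof. by rewrite /peval big_seq1 monoX mul1r. Qed.

Lemma peval_pow d s n (x : 'I_d -> C) : peval (ppow s n) x = peval s x ^+ n.
Proof.
elim: n => [|n IH]; first by rewrite expr0 /ppow /= peval_const.
by rewrite /ppow iterS peval_mul -/(ppow s n) IH exprS.
Qed.

Lemma peval_shift d y b (x : 'I_d -> C) :
  peval (shiftp y b) x = \prod_(j < d) (x j + y j) ^+ b j.
Proof.
rewrite /shiftp (big_morph (fun s => peval s x) (fun s1 s2 => @peval_mul d s1 s2 x) (peval_const 1 x)).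
apply: eq_bigr => j _.
by rewrite peval_pow /peval big_cat /= -/(peval _ _) -/(peval _ _) peval_X peval_const.
Qed.

Lemma evD d (a b : Zd d) j : ev (a + b) j = ev a j + ev b j.
Proof. by rewrite /ev !mxE intrD. Qed.
Lemma evN d (a : Zd d) j : ev (- a) j = - ev a j.
Proof. by rewrite /ev !mxE intrN. Qed.

Lemma DRA_LRep d (A : seq (Zd d)) P : DRA A P -> exists s, LRep P s.
Proof. by case=> /Laurent_LRep. Qed.

Lemma DRA_add d (A : seq (Zd d)) P Q : DRA A P -> DRA A Q -> DRA A (opadd P Q).
Proof.
move=> [/Laurent_LRep [s1 H1] R1] [/Laurent_LRep [s2 H2] R2]; split.
  apply: (@LRep_Laurent _ _ (s1 ++ s2)) => u c.
  by rewrite big_cat /opadd H1 H2.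
move=> u Hu; have [[t1 T1] N1] := R1 u Hu; have [[t2 T2] N2] := R2 u Hu.
split.
  exists (t1 ++ t2) => c; rewrite /opadd mem_cat.
  case: (eqVneq (P u c) 0) => [->|/eqP/T1 -> //]; rewrite add0r => /T2 ->; by rewrite orbT.
move=> c; rewrite /opadd.
case: (eqVneq (P u c) 0) => [->|/eqP/N1 //]; rewrite add0r; exact: N2.
Qed.

Lemma DRA_scale d (A : seq (Zd d)) k P : DRA A P -> DRA A (opscale k P).
Proof.
move=> [/Laurent_LRep [s1 H1] R1]; split.
  apply: (@LRep_Laurent _ _ [seq (k * p.1.1, p.1.2, p.2) | p <- s1]) => u c.
  rewrite big_map /opscale H1 mulr_sumr; apply: eq_bigr => p _ /=; by rewrite mulrA.
move=> u Hu; have [[t1 T1] N1] := R1 u Hu; split.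
  exists t1 => c; rewrite /opscale.
  by case: (eqVneq (P u c) 0) => [->|/eqP/T1 -> //]; rewrite mulr0.
move=> c; rewrite /opscale.
by case: (eqVneq (P u c) 0) => [->|/eqP/N1 //]; rewrite mulr0.
Qed.

Lemma DRA_tsmon0 d (A : seq (Zd d)) b : DRA A (tsmon 0 b).
Proof.
split.
  apply: (@LRep_Laurent _ _ [:: (1, 0, b)]) => u c.
  by rewrite big_seq1 mul1r.
move=> u [[t T] N]; split.
  exists t => c; rewrite tsmonE subr0.
  by case: (eqVneq (u c) 0) => [->|/eqP/T -> //]; rewrite mulr0.
move=> c; rewrite tsmonE subr0.
by case: (eqVneq (u c) 0) => [->|/eqP/N //]; rewrite mulr0.
Qed.

Lemma opid_tsmon d : @opid d = tsmon 0 (fun _ => 0%N).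
Proof.
apply: functional_extensionality => u; apply: functional_extensionality => c.
by rewrite tsmonE mono0 mul1r subr0.
Qed.

Lemma DRA_id d (A : seq (Zd d)) : DRA A (@opid d).
Proof. rewrite opid_tsmon; exact: DRA_tsmon0. Qed.

Lemma DRA_S d (A : seq (Zd d)) j : DRA A (opS j).
Proof. exact: DRA_tsmon0. Qed.

Definition comp_terms d (p q : term d) : seq (term d) :=
  [seq (p.1.1 * q.1.1 * m.1, p.1.2 + q.1.2, m.2) |
     m <- pmul (shiftp (ev q.1.2) p.2) [:: (1, q.2)]].

Lemma LRep_mul d (P Q : Op d) s1 s2 : LRep P s1 -> LRep Q s2 ->
  LRep (opmul P Q) (flatten [seq comp_terms p q | p <- s1, q <- s2]).
Proof.
move=> H1 H2 u c.
rewrite /opmul H1 big_flatten big_allpairs_dep /=; apply: eq_bigr => p _.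
rewrite tsmonE H2 mulr_sumr mulr_sumr; apply: eq_bigr => q _.
rewrite big_map /=.
have E : c - p.1.2 - q.1.2 = c - (p.1.2 + q.1.2) by rewrite opprD addrA.
transitivity (p.1.1 * q.1.1 *
   peval (pmul (shiftp (ev q.1.2) p.2) [:: (1, q.2)]) (ev (c - (p.1.2 + q.1.2)))
   * u (c - (p.1.2 + q.1.2))); last first.
  rewrite /peval big_distrr big_distrl /=; apply: eq_bigr => m _.
  rewrite tsmonE; ring.
rewrite peval_mul peval_shift /peval big_seq1 mul1r /= tsmonE E.
have -> : \prod_(j < d) (ev (c - (p.1.2 + q.1.2)) j + ev q.1.2 j) ^+ p.2 j
          = mono (ev (c - p.1.2)) p.2.
  rewrite /mono; apply: eq_bigr => j _; congr (_ ^+ _).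
  by rewrite -evD opprD addrA subrK.
ring.
Qed.

Lemma DRA_mul d (A : seq (Zd d)) P Q : DRA A P -> DRA A Q -> DRA A (opmul P Q).
Proof.
move=> [/Laurent_LRep [s1 H1] R1] [/Laurent_LRep [s2 H2] R2]; split.
  exact: (LRep_Laurent (LRep_mul H1 H2)).
by move=> u /R2 /R1.
Qed.

Lemma opSE d j (u : Fn d) c : opS j u c = ev c j * u c.
Proof. by rewrite /opS tsmonE subr0 monoX. Qed.

Lemma comm_left d (X : Op d) G a j : (forall u c, X u c = G c * u (c - a)) ->
  opmul (opS j) X = opmul X (opadd (opS j) (opscale (1 * ev a j) (@opid d))).
Proof.
move=> H; apply: functional_extensionality => u; apply: functional_extensionality => c.
rewrite /opmul opSE !H /opadd /opscale /opid opSE evD evN; ring.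
Qed.

Lemma comm_right d (X : Op d) G a j : (forall u c, X u c = G c * u (c - a)) ->
  opmul X (opS j) = opmul (opadd (opS j) (opscale (-1 * ev a j) (@opid d))) X.
Proof.
move=> H; apply: functional_extensionality => u; apply: functional_extensionality => c.
rewrite /opmul /opadd /opscale /opid opSE !H opSE evD evN; ring.
Qed.

Lemma mulS_left d b (j : 'I_d) :
  opmul (opS j) (tsmon 0 b) = tsmon 0 (fun i => (b i + (i == j))%N).
Proof.
apply: functional_extensionality => u; apply: functional_extensionality => c.
rewrite /opmul opSE !tsmonE monoD monoX subr0; ring.
Qed.

Lemma mulS_right d b (j : 'I_d) :
  opmul (tsmon 0 b) (opS j) = tsmon 0 (fun i => (b i + (i == j))%N).
Proof.
apply: functional_extensionality => u; apply: functional_extensionality => c.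
rewrite /opmul !tsmonE opSE monoD monoX subr0; ring.
Qed.

Record gmod d (A : seq (Zd d)) (V : lmodType C) (mul : Op d -> Op d -> Op d) (sg : C)
  (act : Op d -> V -> V) : Prop := {
 g_lin : forall P, DRA A P -> forall (k : C) x y, act P (k *: x + y) = k *: act P x + act P y;
 g_add : forall P Q, DRA A P -> DRA A Q -> forall x, act (opadd P Q) x = act P x + act Q x;
 g_scale : forall k P, DRA A P -> forall x, act (opscale k P) x = k *: act P x;
 g_mul : forall P Q, DRA A P -> DRA A Q -> forall x, act (mul P Q) x = act P (act Q x);
 g_one : forall x, act (@opid d) x = x;
 g_mulD : forall P Q, DRA A P -> DRA A Q -> DRA A (mul P Q);
 g_comm : forall (X : Op d) (G : Zd d -> C) a j, (forall u c, X u c = G c * u (c - a)) ->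
     mul (opS j) X = mul X (opadd (opS j) (opscale (sg * ev a j) (@opid d)));
 g_mulS : forall b j, mul (opS j) (tsmon 0 b) = tsmon 0 (fun i => (b i + (i == j))%N);
 g_sg : sg != 0 }.

Lemma gmod_left d (A : seq (Zd d)) (V : lmodType C) act :
  leftDmod A act -> @gmod d A V (@opmul d) 1 act.
Proof.
case=> H1 H2 H3 H4 H5; split => //.
- exact: DRA_mul.
- exact: comm_left.
- exact: mulS_left.
- exact: oner_neq0.
Qed.

Lemma gmod_right d (A : seq (Zd d)) (V : lmodType C) act :
  rightDmod A act -> @gmod d A V (fun P Q => opmul Q P) (-1) (fun P x => act x P).
Proof.
case=> H1 H2 H3 H4 H5; split => //.
- by move=> P Q HP HQ x; rewrite H4.
- by move=> P Q HP HQ; exact: (DRA_mul HQ HP).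
- exact: comm_right.
- exact: mulS_right.
- by rewrite oppr_eq0 oner_neq0.
Qed.

Definition wt d (V : lmodType C) (act : Op d -> V -> V) (lam : 'I_d -> C) (x : V) :=
  forall j, act (opS j) x = lam j *: x.


Lemma act0 d A V mul sg act (gm : @gmod d A V mul sg act) P : DRA A P -> act P 0 = 0.
Proof.
move=> HP; have := g_lin gm HP (-1) 0 0.
by rewrite scaler0 addr0 scaleN1r addNr.
Qed.

Lemma actD d A V mul sg act (gm : @gmod d A V mul sg act) P x y :
  DRA A P -> act P (x + y) = act P x + act P y.
Proof. by move=> HP; have := g_lin gm HP 1 x y; rewrite !scale1r. Qed.

Lemma actZ d A V mul sg act (gm : @gmod d A V mul sg act) P k x :
  DRA A P -> act P (k *: x) = k *: act P x.
Proof. by move=> HP; have := g_lin gm HP k x 0; rewrite addr0 (act0 gm HP) addr0. Qed.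

Lemma act_sum d A V mul sg act (gm : @gmod d A V mul sg act) P (T : Type) (r : seq T) (F : T -> V) :
  DRA A P -> act P (\sum_(i <- r) F i) = \sum_(i <- r) act P (F i).
Proof.
move=> HP; exact: (big_morph (act P) (fun x y => actD gm x y HP) (act0 gm HP)).
Qed.

Lemma zero_op d : (fun (u : Fn d) (c : Zd d) => (0 : C)) = opscale 0 (@opid d).
Proof.
apply: functional_extensionality => u; apply: functional_extensionality => c.
by rewrite /opscale mul0r.
Qed.

Lemma DRA_big d (A : seq (Zd d)) (T : Type) (r : seq T) (F : T -> Op d) :
  (forall i, DRA A (F i)) -> DRA A (fun u c => \sum_(i <- r) F i u c).
Proof.
move=> HF; elim: r => [|i r IH].
  have -> : (fun (u : Fn d) (c : Zd d) => \sum_(i <- [::]) F i u c) = opscale 0 (@opid d).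
    rewrite -zero_op; apply: functional_extensionality => u.
    by apply: functional_extensionality => c; rewrite big_nil.
  exact/DRA_scale/DRA_id.
have -> : (fun u c => \sum_(j <- i :: r) F j u c) = opadd (F i) (fun u c => \sum_(j <- r) F j u c).
  apply: functional_extensionality => u.
  by apply: functional_extensionality => c; rewrite big_cons.
exact: DRA_add.
Qed.

Lemma act_big d A V mul sg act (gm : @gmod d A V mul sg act) (T : Type) (r : seq T)
  (F : T -> Op d) x :
  (forall i, DRA A (F i)) ->
  act (fun u c => \sum_(i <- r) F i u c) x = \sum_(i <- r) act (F i) x.
Proof.
move=> HF; elim: r => [|i r IH].
  have -> : (fun (u : Fn d) (c : Zd d) => \sum_(i <- [::]) F i u c) = opscale 0 (@opid d).
    rewrite -zero_op; apply: functional_extensionality => u.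
    by apply: functional_extensionality => c; rewrite big_nil.
  by rewrite (g_scale gm) ?scale0r ?big_nil //; exact: DRA_id.
have -> : (fun u c => \sum_(j <- i :: r) F j u c) = opadd (F i) (fun u c => \sum_(j <- r) F j u c).
  apply: functional_extensionality => u.
  by apply: functional_extensionality => c; rewrite big_cons.
by rewrite (g_add gm) ?IH ?big_cons //; exact: DRA_big.
Qed.

Lemma wtZ d A V mul sg act (gm : @gmod d A V mul sg act) lam k x :
  wt act lam x -> wt act lam (k *: x).
Proof.
by move=> H j; rewrite (actZ gm _ _ (DRA_S A j)) H !scalerA mulrC.
Qed.

Lemma act_tsmon0 d A V mul sg act (gm : @gmod d A V mul sg act) lam x :
  wt act lam x -> forall n b, (\sum_(j < d) b j)%N = n -> act (tsmon 0 b) x = mono lam b *: x.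
Proof.
move=> Hx; elim=> [|n IH] b Hb.
  have Eb : b = fun _ => 0%N.
    apply: functional_extensionality => j.
    by move/eqP: Hb; rewrite sum_nat_eq0 => /forallP /(_ j) /eqP.
  by rewrite Eb -opid_tsmon (g_one gm) mono0 scale1r.
case: (pickP (fun j => 0 < b j)%N) => [j Hj | H0]; last first.
  exfalso; move: Hb; rewrite big1 // => i _.
  by move: (H0 i) => /= /negbT; rewrite lt0n negbK => /eqP.
pose b' := fun i => (b i - (i == j))%N.
have Eb : b = fun i => (b' i + (i == j))%N.
  apply: functional_extensionality => i; rewrite /b'.
  by case: (eqVneq i j) => [->|_] /=; rewrite ?subn0 ?addn0 // subnK.
have Hb' : (\sum_(i < d) b' i)%N = n.
  have Hd : (\sum_(i < d) (i == j : nat))%N = 1%N.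
    by rewrite (bigD1 j) //= eqxx big1 => [|i /negbTE -> //]; rewrite addn0.
  by move: Hb; rewrite Eb big_split /= Hd addn1 => -[].
rewrite Eb -(g_mulS gm) (g_mul gm (DRA_S A j) (DRA_tsmon0 A b')) (IH _ Hb') (actZ gm _ _ (DRA_S A j)) Hx.
by rewrite scalerA monoD monoX mulrC.
Qed.

Fixpoint good d (V : lmodType C) (act : Op d -> V -> V) (al : 'I_d -> C)
  (r : seq (('I_d -> C) * V)) : Prop :=
  match r with
  | [::] => True
  | p :: r' => (wt act p.1 p.2 /\ exists j, p.1 j <> al j) /\ good act al r'
  end.

Definition Nset d (V : lmodType C) (act : Op d -> V -> V) (al : 'I_d -> C) (x : V) :=
  exists r, good act al r /\ x = \sum_(p <- r) p.2.

Lemma good_cat d (V : lmodType C) act al (r1 r2 : seq (('I_d -> C) * V)) :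
  good act al r1 -> good act al r2 -> good act al (r1 ++ r2).
Proof. by elim: r1 => [//|p r IH] /= [H1 H2] H3; split => //; apply: IH. Qed.

Lemma good_map d (V : lmodType C) act al (r : seq (('I_d -> C) * V)) (f : V -> V) :
  (forall lam x, wt act lam x -> wt act lam (f x)) ->
  good act al r -> good act al [seq (p.1, f p.2) | p <- r].
Proof.
move=> Hf; elim: r => [//|p r IH] /= [[H1 H2] H3].
by split; [split; [exact: Hf|] | apply: IH].
Qed.

Lemma N0 d (V : lmodType C) act al : @Nset d V act al 0.
Proof. by exists [::]; rewrite big_nil. Qed.

Lemma ND d (V : lmodType C) act al x y : @Nset d V act al x -> Nset act al y -> Nset act al (x + y).
Proof.
move=> [r1 [H1 ->]] [r2 [H2 ->]]; exists (r1 ++ r2); split; first exact: good_cat.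
by rewrite big_cat.
Qed.

Lemma NZ d A V mul sg act (gm : @gmod d A V mul sg act) al k x :
  Nset act al x -> Nset act al (k *: x).
Proof.
move=> [r [H ->]]; exists [seq (p.1, k *: p.2) | p <- r]; split.
  apply: (good_map (f := fun y => k *: y)) => // lam y /=; move=> Hy; have := (wtZ gm k Hy). done.
by rewrite big_map scaler_sumr.
Qed.

Lemma N1 d (V : lmodType C) act al lam (x : V) : wt act lam x -> (exists j, lam j <> al j) ->
  @Nset d V act al x.
Proof.
by move=> H1 H2; exists [:: (lam, x)]; split => //; rewrite big_seq1.
Qed.

Lemma N_sum d (V : lmodType C) act al (T : Type) (r : seq T) (F : T -> V) :
  (forall i, @Nset d V act al (F i)) -> Nset act al (\sum_(i <- r) F i).
Proof.
move=> HF; elim: r => [|i r IH]; first by rewrite big_nil; exact: N0.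
by rewrite big_cons; apply: ND.
Qed.

Definition projop d (al mu : 'I_d -> C) (j : 'I_d) : Op d :=
  opscale (al j - mu j)^-1 (opadd (opS j) (opscale (- mu j) (@opid d))).

Lemma DRA_projop d (A : seq (Zd d)) al mu j : DRA A (projop al mu j).
Proof. exact/DRA_scale/DRA_add/DRA_scale/DRA_id/DRA_S. Qed.

Lemma act_projop d A V mul sg act (gm : @gmod d A V mul sg act) al mu j lam z :
  wt act lam z -> act (projop al mu j) z = ((al j - mu j)^-1 * (lam j - mu j)) *: z.
Proof.
move=> Hz; rewrite /projop (g_scale gm) ?(g_add gm) ?(g_scale gm) ?(g_one gm) ?Hz.
- by rewrite -scalerDl scalerA.
all: by repeat first [exact: DRA_id | exact: DRA_S | apply: DRA_add | apply: DRA_scale].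
Qed.

Lemma indep d A V mul sg act (gm : @gmod d A V mul sg act) al v :
  wt act al v -> forall n (r : seq (('I_d -> C) * V)), size r = n -> good act al r ->
  forall c, c *: v = \sum_(p <- r) p.2 -> c *: v = 0.
Proof.
move=> Hv; elim=> [|n IH] r Hs Hr c E.
  by move: E; case: r Hs Hr => // _ _; rewrite big_nil.
case: r Hs Hr E => [//|[mu y] r] /= [Hs] [[Hy [j Hj]] Hr] E.
have Hne : al j - mu j != 0 by rewrite subr_eq0; apply/eqP => H; apply: Hj; rewrite H.
pose F := projop al mu j.
have HF : DRA A F := DRA_projop _ _ _ _.
have E2 := congr1 (act F) E.
rewrite (actZ gm _ _ HF) (act_projop gm _ _ _ Hv) mulVf // scale1r in E2.
rewrite big_cons (actD gm _ _ HF) (act_projop gm _ _ _ Hy) subrr mulr0 scale0r add0r in E2.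
rewrite (act_sum gm _ _ HF) in E2.
apply: (IH [seq (p.1, act F p.2) | p <- r]).
- by rewrite size_map.
- apply: (good_map (f := act F)) => // lam x Hx; rewrite (act_projop gm _ _ _ Hx); exact: (wtZ gm _ Hx).
- by rewrite E2 big_map.
Qed.

Lemma C_intr_eq0 (z : int) : ((z%:~R : C) == 0) = (z == 0).
Proof. exact: (@intr_eq0 (complex Rdefinitions.R) z). Qed.

Definition Xa d (s : seq (term d)) (a : Zd d) : Op d :=
  fun u c => \sum_(p <- [seq p <- s | p.1.2 == a]) p.1.1 * tsmon p.1.2 p.2 u c.
Definition Ga d (s : seq (term d)) (a : Zd d) (c : Zd d) : C :=
  \sum_(p <- [seq p <- s | p.1.2 == a]) p.1.1 * mono (ev (c - a)) p.2.

Lemma Xa_E d (s : seq (term d)) a u c : Xa s a u c = Ga s a c * u (c - a).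
Proof.
rewrite /Xa /Ga big_distrl !big_filter; apply: eq_bigr => p /eqP Hp.
by rewrite tsmonE Hp mulrA.
Qed.

Lemma DRA_Xa d (A : seq (Zd d)) X s a : DRA A X -> LRep X s -> DRA A (Xa s a).
Proof.
move=> [_ RX] H; split; first exact: (@LRep_Laurent _ _ [seq p <- s | p.1.2 == a]).
move=> u [[t T] N]; split.
  exists [seq z + a | z <- t] => c; rewrite Xa_E.
  case: (eqVneq (u (c - a)) 0) => [->|/eqP /T Hc _]; first by rewrite mulr0.
  by apply/mapP; exists (c - a) => //; rewrite subrK.
move=> c; rewrite Xa_E.
case: (eqVneq (u (c - a)) 0) => [->|/eqP /N Hc]; first by rewrite mulr0.
case: (eqVneq (Ga s a c) 0) => [->|HG _]; first by rewrite mul0r.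
pose del := fun z : Zd d => if z == c - a then (1 : C) else 0.
have Hdel : inRA A del.
  split.
    by exists [:: c - a] => z; rewrite /del; case: (eqVneq z (c - a)) => [->|]; rewrite ?mem_seq1 ?eqxx.
  by move=> z; rewrite /del; case: (eqVneq z (c - a)) => [->|].
have [_ NX] := RX _ Hdel; apply: NX.
suff -> : X del c = Ga s a c by apply/eqP.
rewrite H /Ga big_filter [RHS]big_mkcond; apply: eq_bigr => p _ /=.
rewrite tsmonE /del; case: (eqVneq p.1.2 a) => [->|Hne]; first by rewrite eqxx mulr1.

case: eqP => [/addrI/oppr_inj E|_]; [by rewrite E eqxx in Hne | by rewrite !mulr0].
Qed.

Lemma regroup (T : Type) (K : eqType) (key : T -> K) (F : T -> C) (s : seq T) (r : seq K) :
  uniq r -> all (mem r) (map key s) ->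
  \sum_(p <- s) F p = \sum_(a <- r) \sum_(p <- s | key p == a) F p.
Proof.
move=> Ur; elim: s => [|x s IH] /=.
  by rewrite big_nil big1 // => a _; rewrite big_nil.
move=> /andP [Hx Hs].
rewrite big_cons (IH Hs).
rewrite [RHS](eq_bigr (fun a => (if key x == a then F x else 0) + \sum_(p <- s | key p == a) F p)); last first.
  by move=> a _; rewrite big_cons; case: (key x == a); rewrite ?add0r.
rewrite big_split /=; congr (_ + _).
rewrite -big_mkcond /= (eq_bigl (fun a => a == key x)); last by move=> a; rewrite eq_sym.
by rewrite -big_filter filter_pred1_uniq // big_seq1.
Qed.

Definition ds d (s : seq (term d)) : seq (Zd d) := undup (0 :: map (fun p => p.1.2) s).

Lemma X_decomp d (X : Op d) s : LRep X s -> X = fun u c => \sum_(a <- ds s) Xa s a u c.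
Proof.
move=> H; apply: functional_extensionality => u; apply: functional_extensionality => c.
rewrite H (@regroup _ _ (fun p => p.1.2) _ s (ds s)).
- by apply: eq_bigr => a _; rewrite /Xa big_filter.
- exact: undup_uniq.
- by apply/allP => k hk; rewrite /ds inE mem_undup in_cons hk orbT.
Qed.

Definition eps d (al : 'I_d -> C) (s : seq (term d)) : C :=
  \sum_(p <- s | p.1.2 == 0) p.1.1 * mono al p.2.

Lemma N_sum_cond d (V : lmodType C) act al (T : Type) (r : seq T) (P : pred T) (F : T -> V) :
  (forall i, P i -> @Nset d V act al (F i)) -> Nset act al (\sum_(i <- r | P i) F i).
Proof.
move=> HF; elim: r => [|i r IH]; first by rewrite big_nil; exact: N0.
rewrite big_cons; case: (boolP (P i)) => Hi //; apply: ND => //; exact: HF.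
Qed.

Lemma Leps d A V mul sg act (gm : @gmod d A V mul sg act) al v X s :
  wt act al v -> DRA A X -> LRep X s -> Nset act al (act X v - eps al s *: v).
Proof.
move=> Hv HX H.
have HXa : forall a, DRA A (Xa s a) by move=> a; exact: DRA_Xa HX H.
rewrite (X_decomp H) (act_big gm _ _ HXa).
rewrite (bigD1_seq 0) /=; last exact: undup_uniq; last by rewrite /ds mem_undup mem_head.
have E0 : act (Xa s 0) v = eps al s *: v.
  have -> : Xa s 0 = fun u c => \sum_(p <- [seq p <- s | p.1.2 == 0]) opscale p.1.1 (tsmon 0 p.2) u c.
    apply: functional_extensionality => u; apply: functional_extensionality => c.
    by rewrite /Xa /= !big_filter; apply: eq_bigr => p /eqP ->.
  rewrite (act_big gm); last by move=> p; apply/DRA_scale/DRA_tsmon0.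
  rewrite /eps scaler_suml big_filter; apply: eq_bigr => p _.
  rewrite (g_scale gm _ (DRA_tsmon0 A p.2)).
  have E := act_tsmon0 gm Hv (b := p.2) erefl.
  transitivity (p.1.1 *: (mono al p.2 *: v)); first by congr (_ *: _); exact: E.
  exact: scalerA.
rewrite E0 addrAC subrr add0r.
apply: N_sum_cond => a Ha.
apply: (N1 (lam := fun j => al j + sg * ev a j)).
  move=> j.
  have HS := DRA_S A j.
  have HS' : DRA A (opadd (opS j) (opscale (sg * ev a j) (@opid d))).
    exact/DRA_add/DRA_scale/DRA_id.
  rewrite -(g_mul gm HS (HXa a)) (g_comm gm j (Xa_E s a)).
  have HSc : DRA A (opscale (sg * ev a j) (@opid d)) by exact/DRA_scale/DRA_id.
  rewrite (g_mul gm (HXa a) HS') (g_add gm HS HSc) (g_scale gm _ (DRA_id A)).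
  by rewrite (g_one gm) Hv -scalerDl (actZ gm _ _ (HXa a)).
apply: NNPP => Hn; move/negP: Ha; apply; apply/eqP/matrixP => i j.
rewrite (ord1 i) !mxE; apply/eqP; rewrite -C_intr_eq0.
have : al j + sg * ev a j = al j by apply: NNPP => Hne; apply: Hn; exists j.
move/eqP; rewrite -subr_eq0 addrAC subrr add0r mulf_eq0 (negbTE (g_sg gm)) /=.
by [].
Qed.

Lemma Nv d A V mul sg act (gm : @gmod d A V mul sg act) al v c :
  wt act al v -> Nset act al (c *: v) -> c *: v = 0.
Proof.
move=> Hv [r [Hr E]]; exact: (indep gm Hv erefl Hr E).
Qed.

Lemma NB d A V mul sg act (gm : @gmod d A V mul sg act) al x y :
  Nset act al x -> Nset act al y -> Nset act al (x - y).
Proof. by move=> Hx Hy; apply: ND => //; rewrite -scaleN1r; move: Hy; apply: (NZ gm). Qed.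

Lemma N_eps d A V mul sg act (gm : @gmod d A V mul sg act) al v X s :
  wt act al v -> v <> 0 -> DRA A X -> LRep X s ->
  (Nset act al (act X v) <-> eps al s = 0).
Proof.
move=> Hv Hv0 HX H; have HN := Leps gm Hv HX H; split.
  move=> HXv; have := NB gm HXv HN; rewrite opprB addrC subrK => /(Nv gm Hv).
  by move/eqP; rewrite scaler_eq0 => /orP [/eqP //| /eqP].
by move=> He; move: HN; rewrite He scale0r subr0.
Qed.

Definition gsimple d (A : seq (Zd d)) (V : lmodType C) (act : Op d -> V -> V) : Prop :=
  (exists x : V, x <> 0) /\
  forall S : V -> Prop, [/\ S 0, (forall x y, S x -> S y -> S (x + y)),
     (forall (k : C) x, S x -> S (k *: x)) & (forall P x, DRA A P -> S x -> S (act P x))] ->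
  (forall x, S x -> x = 0) \/ (forall x, S x).

Lemma gen_char d A V mul sg act (gm : @gmod d A V mul sg act) al v :
  wt act al v -> (forall x, exists P, DRA A P /\ x = act P v) -> gsimple A act ->
  forall P, DRA A P ->
  ((forall x, act P x = 0) <->
   (forall Q R, DRA A Q -> DRA A R -> forall s, LRep (mul Q (mul P R)) s -> eps al s = 0)).
Proof.
move=> Hv Hgen Hs P HP.
have Hv0 : v <> 0.
  case: Hs => [[x Hx] _] Hv0; apply: Hx; have [Q [HQ ->]] := Hgen x.
  by rewrite Hv0 (act0 gm HQ).
split.
  move=> HA Q R HQ HR s Hs'.
  have HPR := g_mulD gm HP HR; have HX := g_mulD gm HQ HPR.
  apply/(N_eps gm Hv Hv0 HX Hs').
  rewrite (g_mul gm HQ HPR) (g_mul gm HP HR) HA (act0 gm HQ); exact: N0.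
move=> Hc x; have [R [HR ->]] := Hgen x.
set y := act P (act R v); apply: NNPP => Hy.
pose S := fun z => exists Q, DRA A Q /\ z = act Q y.
have HS : [/\ S 0, (forall x y, S x -> S y -> S (x + y)),
     (forall (k : C) x, S x -> S (k *: x)) & (forall P x, DRA A P -> S x -> S (act P x))].
  split.
  - exists (opscale 0 (@opid d)); split; first exact/DRA_scale/DRA_id.
    by rewrite (g_scale gm _ (DRA_id A)) scale0r.
  - move=> _ _ [Q1 [H1 ->]] [Q2 [H2 ->]]; exists (opadd Q1 Q2); split; first exact: DRA_add.
    by rewrite (g_add gm H1 H2).
  - move=> k _ [Q1 [H1 ->]]; exists (opscale k Q1); split; first exact: DRA_scale.
    by rewrite (g_scale gm _ H1).
  - move=> P' _ HP' [Q1 [H1 ->]]; exists (mul P' Q1); split; first exact: (g_mulD gm HP' H1).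
    by rewrite (g_mul gm HP' H1).
case: (Hs.2 S HS) => [H0 | Hall].
  apply: Hy; apply: H0; exists (@opid d); split; first exact: DRA_id.
  by rewrite (g_one gm).
have [Q [HQ Ev]] := Hall v.
have HPR := g_mulD gm HP HR; have HX := g_mulD gm HQ HPR.
have [s Hs'] := DRA_LRep HX.
move: (Hc Q R HQ HR s Hs') => /(N_eps gm Hv Hv0 HX Hs').
rewrite (g_mul gm HQ HPR) (g_mul gm HP HR) -/y -Ev -[v]scale1r => /(Nv gm Hv).
move/eqP; rewrite scaler_eq0 oner_eq0 /= => /eqP; exact: Hv0.
Qed.

Theorem proposition6p1 (d : nat) (A : seq (Zd d)) (genA : generates_Zd A)
  (alpha : 'I_d -> C)
  (L : lmodType C) (actL : Op d -> L -> L)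
  (HLmod : leftDmod A actL) (HLO : inO_left actL) (HLs : lsimple A actL)
  (HLq : quot_M A alpha actL)
  (L' : lmodType C) (actR : L' -> Op d -> L')
  (HRmod : rightDmod A actR) (HRO : inO_right actR) (HRs : rsimple A actR)
  (HRq : quot_RM A alpha actR) :
  forall P : Op d, lAnn A actL P <-> rAnn A actR P.
Proof.
move=> P.
have gmL := gmod_left HLmod; have gmR := gmod_right HRmod.
have [v [Hv Hgv]] := HLq; have [w [Hw Hgw]] := HRq.
have HLs' : gsimple A actL := HLs.
have HRs' : gsimple A (fun P x => actR x P) := HRs.
have HLc := gen_char gmL (al := alpha) Hv Hgv HLs'.
have HRc := gen_char gmR (al := alpha) (v := w) Hw Hgw HRs'.
split.
  case=> HP HA; split => //.
  apply/(HRc P HP) => Q R HQ HR s Hs.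
  exact: (proj1 (HLc P HP) HA R Q HR HQ s Hs).
case=> HP HA; split => //.
apply/(HLc P HP) => Q R HQ HR s Hs.
exact: (proj1 (HRc P HP) HA R Q HR HQ s Hs).
Qed.
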